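(* Let $T_0$ and $T_0^+$ be the theories described in the context. Then: (1) If $M$ is a model of $T_0^+$, then $Q_0^M$, $Q_1^M$ and $Q_2^M$ are all non-empty, and $F_0^M$ and $F_3^M$ are onto (onto $Q_0^M$). (2) Every model $M$ of $T_0$ in which $Q_0^M\neq\emptyset$ and $Q_2^M\neq\emptyset$ and in which $F_0^M$ and $F_3^M$ are onto $Q_0^M$ can be extended to a model of $T_0^+$ with the same universe (i.e. by extending the partial functions); and every model of $T_0^+$ is a model of $T_0$. (3) There are models $M$ of $T_0$ with $Q_0^M\neq\emptyset$, $Q_2^M\neq\emptyset$ and $F_3^M$ onto $Q_0^M$ which cannot be extended to a model of $T_0^+$ with the same universe. (4) Every model of $T_0$ is a submodel of a model of $T_0^+$. (5) $T_0^+$ has the amalgamation property and the joint embedding property.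
   Context: The language consists of unary predicates $Q_0,Q_1,Q_2$ and function symbols $F_0,F_1,F_2,F_3$ ($F_1$ two-place, the others one-place), interpreted as possibly partial functions. $T_0$ is the (incomplete) theory saying: (i) $Q_0,Q_1,Q_2$ partition the universe; (ii) $F_0$ is a partial function from $Q_1$ to $Q_0$; (iii) $F_1$ is a partial two-place function from $Q_2\times Q_0$ to $Q_1$; (iv) $F_2$ is a partial function from $Q_0$ to $Q_2$; (v) $F_3$ is a partial function from $Q_2$ to $Q_0$; (vi) $F_0(F_1(z,x))=x$ for all $(z,x)$ in the domain of $F_1$; (vii) $F_3(F_2(x))=x$ for all $x$ (in the domain of $F_2$). $T_0^+$ is like $T_0$ but additionally requires $F_0,F_1,F_2,F_3$ to be total on $Q_1$, $Q_2\times Q_0$, $Q_0$, $Q_2$ respectively. Submodel convention: $M$ is a submodel of $N$ if $|M|\subseteq|N|$, $Q_i^M=Q_i^N\cap|M|$, and each partial function of $N$ extends the corresponding partial function of $M$ (the fact that a function is undefined at some argument in $M$ need not be preserved in $N$). *)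

(* Defs.v *)
Record Lstr (U : Type) : Type := mkLstr {
  Q0 : U -> Prop;
  Q1 : U -> Prop;
  Q2 : U -> Prop;
  F0 : U -> option U;
  F1 : U -> U -> option U;
  F2 : U -> option U;
  F3 : U -> option U
}.
Arguments Q0 {U} _ _.
Arguments Q1 {U} _ _.
Arguments Q2 {U} _ _.
Arguments F0 {U} _ _.
Arguments F1 {U} _ _ _.
Arguments F2 {U} _ _.
Arguments F3 {U} _ _.

(* M is a model of T0 (universes of structures are nonempty, as usual). *)
Definition T0 {U : Type} (M : Lstr U) : Prop :=
  inhabited U /\
  (forall x, (Q0 M x \/ Q1 M x \/ Q2 M x) /\
             ~ (Q0 M x /\ Q1 M x) /\ ~ (Q0 M x /\ Q2 M x) /\ ~ (Q1 M x /\ Q2 M x)) /\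
  (forall x y, F0 M x = Some y -> Q1 M x /\ Q0 M y) /\
  (forall z x y, F1 M z x = Some y -> Q2 M z /\ Q0 M x /\ Q1 M y) /\
  (forall x y, F2 M x = Some y -> Q0 M x /\ Q2 M y) /\
  (forall x y, F3 M x = Some y -> Q2 M x /\ Q0 M y) /\
  (forall z x y, F1 M z x = Some y -> F0 M y = Some x) /\
  (forall x y, F2 M x = Some y -> F3 M y = Some x).

Definition T0plus {U : Type} (M : Lstr U) : Prop :=
  T0 M /\
  (forall x, Q1 M x -> exists y, F0 M x = Some y) /\
  (forall z x, Q2 M z -> Q0 M x -> exists y, F1 M z x = Some y) /\
  (forall x, Q0 M x -> exists y, F2 M x = Some y) /\
  (forall x, Q2 M x -> exists y, F3 M x = Some y).

Definition onto_Q0 {U : Type} (M : Lstr U) (f : U -> option U) : Prop :=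
  forall x, Q0 M x -> exists y, f y = Some x.

Definition same_universe_extension {U : Type} (M N : Lstr U) : Prop :=
  (forall x, Q0 N x <-> Q0 M x) /\
  (forall x, Q1 N x <-> Q1 M x) /\
  (forall x, Q2 N x <-> Q2 M x) /\
  (forall x y, F0 M x = Some y -> F0 N x = Some y) /\
  (forall z x y, F1 M z x = Some y -> F1 N z x = Some y) /\
  (forall x y, F2 M x = Some y -> F2 N x = Some y) /\
  (forall x y, F3 M x = Some y -> F3 N x = Some y).

Definition embedding {U V : Type} (M : Lstr U) (N : Lstr V) (f : U -> V) : Prop :=
  (forall x y, f x = f y -> x = y) /\
  (forall x, Q0 M x <-> Q0 N (f x)) /\
  (forall x, Q1 M x <-> Q1 N (f x)) /\
  (forall x, Q2 M x <-> Q2 N (f x)) /\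
  (forall x y, F0 M x = Some y -> F0 N (f x) = Some (f y)) /\
  (forall z x y, F1 M z x = Some y -> F1 N (f z) (f x) = Some (f y)) /\
  (forall x y, F2 M x = Some y -> F2 N (f x) = Some (f y)) /\
  (forall x y, F3 M x = Some y -> F3 N (f x) = Some (f y)).

Definition T0plus_AP : Prop :=
  forall (A B C : Type) (MA : Lstr A) (MB : Lstr B) (MC : Lstr C)
         (f : A -> B) (g : A -> C),
    T0plus MA -> T0plus MB -> T0plus MC ->
    embedding MA MB f -> embedding MA MC g ->
    exists (D : Type) (MD : Lstr D) (h : B -> D) (k : C -> D),
      T0plus MD /\ embedding MB MD h /\ embedding MC MD k /\
      (forall a, h (f a) = k (g a)).

Definition T0plus_JEP : Prop :=
  forall (B C : Type) (MB : Lstr B) (MC : Lstr C),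
    T0plus MB -> T0plus MC ->
    exists (D : Type) (MD : Lstr D) (h : B -> D) (k : C -> D),
      T0plus MD /\ embedding MB MD h /\ embedding MC MD k.

(* Main.v *)
Require Import Defs.
From Stdlib Require Import ClassicalEpsilon.

Lemma choose_fun {X Y : Type} (R : X -> Y -> Prop) :
  exists F : X -> option Y, (forall x y, F x = Some y -> R x y) /\
    (forall x, (exists y, R x y) -> exists y, F x = Some y).
Proof.
  exists (fun x => match excluded_middle_informative (exists y, R x y) with
          | left H => Some (proj1_sig (constructive_indefinite_description _ H))
          | right _ => None end).
  split.
  - intros x y. destruct excluded_middle_informative as [H|H]; [|discriminate].
    destruct constructive_indefinite_description as [y' Hy']; simpl.
    intros E; injection E; intros; subst; auto.
  - intros x Hx. destruct excluded_middle_informative as [H|H]; [eauto|contradiction].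
Qed.

Lemma part1 {U} (M : Lstr U) : T0plus M ->
     (exists x, Q0 M x) /\ (exists x, Q1 M x) /\ (exists x, Q2 M x) /\
     onto_Q0 M (F0 M) /\ onto_Q0 M (F3 M).
Proof.
  intros [[[u] [Hp [H0 [H1 [H2 [H3 [H6 H7]]]]]]] [T0' [T1 [T2 T3]]]].
  assert (Hq0 : exists x, Q0 M x).
  { destruct (Hp u) as [[Hq|[Hq|Hq]] _]; [eauto| destruct (T0' u Hq) as [y Hy]; exists y; apply (H0 _ _ Hy) | destruct (T3 u Hq) as [y Hy]; exists y; apply (H3 _ _ Hy)]. }
  destruct Hq0 as [a Ha]. destruct (T2 a Ha) as [z Hz].
  assert (Hz2 : Q2 M z) by apply (H2 _ _ Hz).
  destruct (T1 z a Hz2 Ha) as [y Hy].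
  split; [eauto|]. split; [exists y; apply (H1 _ _ _ Hy)|]. split; [eauto|].
  split.
  - intros x Hx; destruct (T1 z x Hz2 Hx) as [y' Hy']; exists y'; eapply H6; eauto.
  - intros x Hx; destruct (T2 x Hx) as [y' Hy']; exists y'; apply H7; auto.
Qed.

Lemma part2 {U} (M : Lstr U) : T0 M -> (exists x, Q0 M x) -> (exists x, Q2 M x) ->
  onto_Q0 M (F0 M) -> onto_Q0 M (F3 M) ->
  exists N : Lstr U, T0plus N /\ same_universe_extension M N.
Proof.
  intros HM [a0 Ha0] _ On0 On3.
  destruct HM as [Hinh [Hp [H0 [H1 [H2 [H3 [H6 H7]]]]]]].
  destruct (choose_fun (fun x y => F0 M x = Some y \/ (F0 M x = None /\ Q1 M x /\ y = a0))) as [G0 [G0a G0b]].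
  destruct (choose_fun (fun (p : U*U) y => F1 M (fst p) (snd p) = Some y \/ (F1 M (fst p) (snd p) = None /\ Q2 M (fst p) /\ Q0 M (snd p) /\ F0 M y = Some (snd p)))) as [G1 [G1a G1b]].
  destruct (choose_fun (fun x y => F2 M x = Some y \/ (F2 M x = None /\ Q0 M x /\ F3 M y = Some x))) as [G2 [G2a G2b]].
  destruct (choose_fun (fun x y => F3 M x = Some y \/ (F3 M x = None /\ Q2 M x /\ y = a0))) as [G3 [G3a G3b]].
  exists (mkLstr U (Q0 M) (Q1 M) (Q2 M) G0 (fun z x => G1 (z,x)) G2 G3).
  assert (E0 : forall x y, F0 M x = Some y -> G0 x = Some y).
  { intros x y E. destruct (G0b x) as [y' Hy']. exists y; left; auto.
    destruct (G0a _ _ Hy') as [Hr|[Hr _]]; rewrite E in Hr; [inversion Hr; subst; auto | discriminate]. }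
  assert (E1 : forall z x y, F1 M z x = Some y -> G1 (z,x) = Some y).
  { intros z x y E. destruct (G1b (z,x)) as [y' Hy']. exists y; left; auto.
    destruct (G1a _ _ Hy') as [Hr|[Hr _]]; simpl in Hr; rewrite E in Hr; [inversion Hr; subst; auto | discriminate]. }
  assert (E2 : forall x y, F2 M x = Some y -> G2 x = Some y).
  { intros x y E. destruct (G2b x) as [y' Hy']. exists y; left; auto.
    destruct (G2a _ _ Hy') as [Hr|[Hr _]]; rewrite E in Hr; [inversion Hr; subst; auto | discriminate]. }
  assert (E3 : forall x y, F3 M x = Some y -> G3 x = Some y).
  { intros x y E. destruct (G3b x) as [y' Hy']. exists y; left; auto.
    destruct (G3a _ _ Hy') as [Hr|[Hr _]]; rewrite E in Hr; [inversion Hr; subst; auto | discriminate]. }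
  split; [split|].
  - unfold T0; simpl. split; [exact Hinh|]. split; [exact Hp|].
    split; [intros x y Hg; destruct (G0a _ _ Hg) as [E|[_ [Hq ->]]]; [apply H0; auto| auto]|].
    split; [intros z x y Hg; destruct (G1a _ _ Hg) as [E|[_ [Hz [Hx Hy]]]]; simpl in *; [apply H1; auto| split;[|split]; auto; apply (H0 _ _ Hy)]|].
    split; [intros x y Hg; destruct (G2a _ _ Hg) as [E|[_ [Hx Hy]]]; [apply H2; auto| split; auto; apply (H3 _ _ Hy)]|].
    split; [intros x y Hg; destruct (G3a _ _ Hg) as [E|[_ [Hq ->]]]; [apply H3; auto| auto]|].
    split; [intros z x y Hg; apply E0; destruct (G1a _ _ Hg) as [E|[_ [_ [_ Hy]]]]; simpl in *; [eapply H6; eauto| auto]|].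
    intros x y Hg; apply E3; destruct (G2a _ _ Hg) as [E|[_ [_ Hy]]]; [eapply H7; eauto| auto].
  - simpl. split; [|split; [|split]].
    + intros x Hx; apply G0b; destruct (F0 M x) eqn:E; [eauto | exists a0; right; auto].
    + intros z x Hz Hx; apply (G1b (z,x)); simpl; destruct (F1 M z x) eqn:E;
        [eauto | destruct (On0 x Hx) as [y Hy]; exists y; right; auto].
    + intros x Hx; apply G2b; destruct (F2 M x) eqn:E;
        [eauto | destruct (On3 x Hx) as [y Hy]; exists y; right; auto].
    + intros x Hx; apply G3b; destruct (F3 M x) eqn:E; [eauto | exists a0; right; auto].
  - unfold same_universe_extension; simpl.
    repeat split; auto.
Qed.

Lemma part2b {U} (M : Lstr U) : T0plus M -> T0 M.
Proof. intros [H _]; exact H. Qed.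

Lemma part3 : exists (U : Type) (M : Lstr U),
      T0 M /\ (exists x, Q0 M x) /\ (exists x, Q2 M x) /\ onto_Q0 M (F3 M) /\
      ~ (exists N : Lstr U, T0plus N /\ same_universe_extension M N).
Proof.
  exists bool, (mkLstr bool (fun b => b = true) (fun _ => False) (fun b => b = false)
    (fun _ => None) (fun _ _ => None) (fun b => if b then Some false else None)
    (fun b => if b then None else Some true)).
  split; [|split; [|split; [|split]]].
  - unfold T0; simpl. split; [constructor; exact true|].
    split; [intros [|]; intuition discriminate|].
    split; [discriminate|]. split; [discriminate|].
    split; [intros [|] y H; inversion H; auto|].
    split; [intros [|] y H; inversion H; auto|].
    split; [discriminate|].
    intros [|] y H; inversion H; auto.
  - exists true; reflexivity.
  - exists false; reflexivity.
  - intros x Hx; simpl in Hx; subst; exists false; reflexivity.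
  - intros [N [[HN [T0' [T1 _]]] [SQ0 [SQ1 [SQ2 _]]]]].
    destruct (T1 false true) as [y Hy]; [apply SQ2; reflexivity | apply SQ0; reflexivity|].
    destruct HN as [_ [_ [_ [H1 _]]]].
    apply (SQ1 y). apply (H1 _ _ _ Hy).
Qed.

Inductive V {U : Type} (M : Lstr U) : Type :=
| vin : U -> V M | vc : V M
| vp1 : option {x | Q0 M x} -> V M | vp2 : option {x | Q0 M x} -> V M.
Arguments vin {U M} _.
Arguments vc {U M}.
Arguments vp1 {U M} _.
Arguments vp2 {U M} _.

Definition ext1 {U} (M : Lstr U) : Lstr (V M) := mkLstr _
 (fun v => match v with vin x => Q0 M x | vc => True | _ => False end)
 (fun v => match v with vin x => Q1 M x | vp1 _ => True | _ => False end)
 (fun v => match v with vin x => Q2 M x | vp2 _ => True | _ => False end)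
 (fun v => match v with vin x => option_map vin (F0 M x)
   | vp1 (Some s) => Some (vin (proj1_sig s)) | vp1 None => Some vc | _ => None end)
 (fun v w => match v, w with vin z, vin x => option_map vin (F1 M z x) | _, _ => None end)
 (fun v => match v with vin x => option_map vin (F2 M x) | _ => None end)
 (fun v => match v with vin x => option_map vin (F3 M x)
   | vp2 (Some s) => Some (vin (proj1_sig s)) | vp2 None => Some vc | _ => None end).

Lemma omap_some {A B} (g : A -> B) o y : option_map g o = Some y -> exists x, o = Some x /\ y = g x.
Proof. destruct o; simpl; intros H; inversion H; eauto. Qed.

Lemma ext1_T0 {U} (M : Lstr U) : T0 M -> T0 (ext1 M).
Proof.
  intros [Hinh [Hp [H0 [H1 [H2 [H3 [H6 H7]]]]]]].
  unfold T0; simpl.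
  split; [constructor; exact vc|].
  split; [intros [x| |o|o]; [apply Hp| tauto..]|].
  split; [intros [x| |[s|]|o] y H; try discriminate;
     [apply omap_some in H; destruct H as [x' [E ->]]; apply H0 in E; exact E
     | inversion H; subst; split; [exact I| exact (proj2_sig s)]
     | inversion H; subst; split; exact I]|].
  split; [intros [z| |o|o] [x| |o'|o'] y H; try discriminate;
     apply omap_some in H; destruct H as [x' [E ->]]; apply H1 in E; exact E|].
  split; [intros [x| |o|o] y H; try discriminate;
     apply omap_some in H; destruct H as [x' [E ->]]; apply H2 in E; exact E|].
  split; [intros [x| |o|[s|]] y H; try discriminate;
     [apply omap_some in H; destruct H as [x' [E ->]]; apply H3 in E; exact E
     | inversion H; subst; split; [exact I| exact (proj2_sig s)]
     | inversion H; subst; split; exact I]|].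
  split; [intros [z| |o|o] [x| |o'|o'] y H; try discriminate;
     apply omap_some in H; destruct H as [x' [E ->]]; apply H6 in E; simpl; rewrite E; reflexivity|].
  intros [x| |o|o] y H; try discriminate;
     apply omap_some in H; destruct H as [x' [E ->]]; apply H7 in E; simpl; rewrite E; reflexivity.
Qed.

Lemma ext1_emb {U} (M : Lstr U) : embedding M (ext1 M) vin.
Proof.
  unfold embedding; simpl.
  split; [intros x y H; inversion H; reflexivity|].
  repeat split; auto; intros; simpl; repeat match goal with H : _ = Some _ |- _ => rewrite H end; reflexivity.
Qed.

Lemma emb_ext {U V'} (M : Lstr U) (N1 N : Lstr V') f :
  embedding M N1 f -> same_universe_extension N1 N -> embedding M N f.
Proof.
  intros [Hi [Q0e [Q1e [Q2e [E0 [E1 [E2 E3]]]]]]] [S0 [S1 [S2 [S3 [S4 [S5 S6]]]]]].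
  split; [exact Hi|].
  split; [intros x; rewrite S0; apply Q0e|].
  split; [intros x; rewrite S1; apply Q1e|].
  split; [intros x; rewrite S2; apply Q2e|].
  split; [intros; apply S3; auto|].
  split; [intros; apply S4; auto|].
  split; intros; [apply S5 | apply S6]; auto.
Qed.

Lemma emb_comp {A B C} (MA : Lstr A) (MB : Lstr B) (MC : Lstr C) f g :
  embedding MA MB f -> embedding MB MC g -> embedding MA MC (fun x => g (f x)).
Proof.
  intros [Hi [Q0e [Q1e [Q2e [E0 [E1 [E2 E3]]]]]]] [Hi' [Q0e' [Q1e' [Q2e' [E0' [E1' [E2' E3']]]]]]].
  split; [intros x y H; auto|].
  split; [intros x; rewrite Q0e; apply Q0e'|].
  split; [intros x; rewrite Q1e; apply Q1e'|].
  split; [intros x; rewrite Q2e; apply Q2e'|].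
  split; [intros; apply E0'; auto|].
  split; [intros; apply E1'; auto|].
  split; intros; [apply E2' | apply E3']; auto.
Qed.

Lemma part4 {U} (M : Lstr U) : T0 M ->
  exists (V : Type) (N : Lstr V) (f : U -> V), T0plus N /\ embedding M N f.
Proof.
  intros HM.
  destruct (part2 (ext1 M)) as [N [HN HS]].
  - apply ext1_T0; auto.
  - exists vc; exact I.
  - exists (vp2 None); exact I.
  - intros [x| |o|o] Hx; simpl in Hx; try contradiction.
    + exists (vp1 (Some (exist _ x Hx))); reflexivity.
    + exists (vp1 None); reflexivity.
  - intros [x| |o|o] Hx; simpl in Hx; try contradiction.
    + exists (vp2 (Some (exist _ x Hx))); reflexivity.
    + exists (vp2 None); reflexivity.
  - exists (V M), N, vin. split; auto. eapply emb_ext; [apply ext1_emb | exact HS].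
Qed.

Lemma union_fun {BI CI X B C Y : Type} (hi : BI -> X) (ki : CI -> X) (ho : B -> Y) (ko : C -> Y)
  (FB : BI -> option B) (FC : CI -> option C) :
  (forall p p', hi p = hi p' -> p = p') -> (forall q q', ki q = ki q' -> q = q') ->
  (forall p q y0 y1, hi p = ki q -> FB p = Some y0 -> FC q = Some y1 -> ho y0 = ko y1) ->
  exists F : X -> option Y,
    (forall p y, FB p = Some y -> F (hi p) = Some (ho y)) /\
    (forall q y, FC q = Some y -> F (ki q) = Some (ko y)) /\
    (forall x y, F x = Some y ->
       (exists p y0, x = hi p /\ FB p = Some y0 /\ y = ho y0) \/
       (exists q y0, x = ki q /\ FC q = Some y0 /\ y = ko y0)).
Proof.
  intros Hh Hk Hov.
  set (R := fun x y => (exists p y0, x = hi p /\ FB p = Some y0 /\ y = ho y0) \/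
       (exists q y0, x = ki q /\ FC q = Some y0 /\ y = ko y0)).
  assert (Rf : forall x y1 y2, R x y1 -> R x y2 -> y1 = y2).
  { intros x y1 y2 [[p [a [-> [E ->]]]]|[q [a [-> [E ->]]]]] [[p' [a' [Ex [E' ->]]]]|[q' [a' [Ex [E' ->]]]]].
    - apply Hh in Ex; subst. rewrite E in E'; inversion E'; reflexivity.
    - eapply Hov; eauto.
    - symmetry; eapply Hov; eauto.
    - apply Hk in Ex; subst. rewrite E in E'; inversion E'; reflexivity. }
  destruct (choose_fun R) as [F [Fa Fb]].
  exists F. split; [|split].
  - intros p y E. assert (Hr : R (hi p) (ho y)) by (left; eauto 6).
    destruct (Fb (hi p)) as [y' Hy']; [eauto|]. rewrite Hy'. f_equal. eapply Rf; eauto.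
  - intros q y E. assert (Hr : R (ki q) (ko y)) by (right; eauto 6).
    destruct (Fb (ki q)) as [y' Hy']; [eauto|]. rewrite Hy'. f_equal. eapply Rf; eauto.
  - intros x y E; apply Fa; auto.
Qed.

Lemma amalg_gen {B C D : Type} (MB : Lstr B) (MC : Lstr C) (h : B -> D) (k : C -> D) :
  T0 MB -> T0 MC ->
  (forall b b', h b = h b' -> b = b') -> (forall c c', k c = k c' -> c = c') ->
  (forall b c, h b = k c -> (Q0 MB b <-> Q0 MC c) /\ (Q1 MB b <-> Q1 MC c) /\ (Q2 MB b <-> Q2 MC c)) ->
  (forall b c y0 y1, h b = k c -> F0 MB b = Some y0 -> F0 MC c = Some y1 -> h y0 = k y1) ->
  (forall b1 b2 c1 c2 y0 y1, h b1 = k c1 -> h b2 = k c2 -> F1 MB b1 b2 = Some y0 -> F1 MC c1 c2 = Some y1 -> h y0 = k y1) ->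
  (forall b c y0 y1, h b = k c -> F2 MB b = Some y0 -> F2 MC c = Some y1 -> h y0 = k y1) ->
  (forall b c y0 y1, h b = k c -> F3 MB b = Some y0 -> F3 MC c = Some y1 -> h y0 = k y1) ->
  exists MD : Lstr D, T0 MD /\ embedding MB MD h /\ embedding MC MD k.
Proof.
  intros HB HC Hh Hk HQ Ov0 Ov1 Ov2 Ov3.
  destruct HB as [[b0] [HpB [HB0 [HB1 [HB2 [HB3 [HB6 HB7]]]]]]].
  destruct HC as [_ [HpC [HC0 [HC1 [HC2 [HC3 [HC6 HC7]]]]]]].
  destruct (union_fun h k h k (F0 MB) (F0 MC) Hh Hk Ov0) as [G0 [G0b [G0c G0a]]].
  destruct (union_fun h k h k (F2 MB) (F2 MC) Hh Hk Ov2) as [G2 [G2b [G2c G2a]]].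
  destruct (union_fun h k h k (F3 MB) (F3 MC) Hh Hk Ov3) as [G3 [G3b [G3c G3a]]].
  assert (Hh2 : forall p p' : B*B, (h (fst p), h (snd p)) = (h (fst p'), h (snd p')) -> p = p').
  { intros [a b] [a' b'] E; simpl in E; injection E; intros E1 E2; apply Hh in E1; apply Hh in E2; subst; reflexivity. }
  assert (Hk2 : forall p p' : C*C, (k (fst p), k (snd p)) = (k (fst p'), k (snd p')) -> p = p').
  { intros [a b] [a' b'] E; simpl in E; injection E; intros E1 E2; apply Hk in E1; apply Hk in E2; subst; reflexivity. }
  assert (Ov1' : forall (p : B*B) (q : C*C) y0 y1, (h (fst p), h (snd p)) = (k (fst q), k (snd q)) ->
     F1 MB (fst p) (snd p) = Some y0 -> F1 MC (fst q) (snd q) = Some y1 -> h y0 = k y1).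
  { intros [a b] [c d] y0 y1 E F G; simpl in *; injection E; intros E1 E2; exact (Ov1 _ _ _ _ _ _ E2 E1 F G). }
  destruct (union_fun (fun p : B*B => (h (fst p), h (snd p))) (fun q : C*C => (k (fst q), k (snd q))) h k
     (fun p => F1 MB (fst p) (snd p)) (fun q => F1 MC (fst q) (snd q)) Hh2 Hk2 Ov1') as [G1 [G1b [G1c G1a]]].
  set (Q0D := fun d => (exists b, d = h b /\ Q0 MB b) \/ (exists c, d = k c /\ Q0 MC c) \/
                       ((forall b, d <> h b) /\ (forall c, d <> k c))).
  set (Q1D := fun d => (exists b, d = h b /\ Q1 MB b) \/ (exists c, d = k c /\ Q1 MC c)).
  set (Q2D := fun d => (exists b, d = h b /\ Q2 MB b) \/ (exists c, d = k c /\ Q2 MC c)).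
  exists (mkLstr D Q0D Q1D Q2D G0 (fun x y => G1 (x, y)) G2 G3).
  assert (L0h : forall b, Q0D (h b) <-> Q0 MB b).
  { intros b; split; [intros [[b' [E H]]|[[c [E H]]|[H _]]]|intros H; left; eauto].
    - apply Hh in E; subst; auto.
    - apply HQ in E; apply E; auto.
    - destruct (H b eq_refl). }
  assert (L0k : forall c, Q0D (k c) <-> Q0 MC c).
  { intros c; split; [intros [[b' [E H]]|[[c' [E H]]|[_ H]]]|intros H; right; left; eauto].
    - symmetry in E; apply HQ in E; apply E; auto.
    - apply Hk in E; subst; auto.
    - destruct (H c eq_refl). }
  assert (L1h : forall b, Q1D (h b) <-> Q1 MB b).
  { intros b; split; [intros [[b' [E H]]|[c [E H]]]|intros H; left; eauto].
    - apply Hh in E; subst; auto.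
    - apply HQ in E; apply E; auto. }
  assert (L1k : forall c, Q1D (k c) <-> Q1 MC c).
  { intros c; split; [intros [[b' [E H]]|[c' [E H]]]|intros H; right; eauto].
    - symmetry in E; apply HQ in E; apply E; auto.
    - apply Hk in E; subst; auto. }
  assert (L2h : forall b, Q2D (h b) <-> Q2 MB b).
  { intros b; split; [intros [[b' [E H]]|[c [E H]]]|intros H; left; eauto].
    - apply Hh in E; subst; auto.
    - apply HQ in E; apply E; auto. }
  assert (L2k : forall c, Q2D (k c) <-> Q2 MC c).
  { intros c; split; [intros [[b' [E H]]|[c' [E H]]]|intros H; right; eauto].
    - symmetry in E; apply HQ in E; apply E; auto.
    - apply Hk in E; subst; auto. }
  split; [|split].
  - unfold T0; simpl.
    split; [constructor; exact (h b0)|].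
    split.
    { intros d.
      destruct (classic (exists b, d = h b)) as [[b ->]|Nb].
      { pose proof (HpB b). rewrite L0h, L1h, L2h. exact H. }
      destruct (classic (exists c, d = k c)) as [[c ->]|Nc].
      { pose proof (HpC c). rewrite L0k, L1k, L2k. exact H. }
      assert (J : Q0D d) by (right; right; split; intros x E; eauto).
      assert (N1 : ~ Q1D d) by (intros [[b [E _]]|[c [E _]]]; eauto).
      assert (N2 : ~ Q2D d) by (intros [[b [E _]]|[c [E _]]]; eauto).
      tauto. }
    split.
    { intros d y H; destruct (G0a _ _ H) as [[b [y0 [-> [E ->]]]]|[c [y0 [-> [E ->]]]]].
      - apply HB0 in E; rewrite L1h, L0h; exact E.
      - apply HC0 in E; rewrite L1k, L0k; exact E. }
    split.
    { intros z x y H; destruct (G1a _ _ H) as [[[b1 b2] [y0 [E [E' ->]]]]|[[c1 c2] [y0 [E [E' ->]]]]];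
        simpl in *; injection E; intros -> ->.
      - apply HB1 in E'; rewrite L2h, L0h, L1h; exact E'.
      - apply HC1 in E'; rewrite L2k, L0k, L1k; exact E'. }
    split.
    { intros d y H; destruct (G2a _ _ H) as [[b [y0 [-> [E ->]]]]|[c [y0 [-> [E ->]]]]].
      - apply HB2 in E; rewrite L0h, L2h; exact E.
      - apply HC2 in E; rewrite L0k, L2k; exact E. }
    split.
    { intros d y H; destruct (G3a _ _ H) as [[b [y0 [-> [E ->]]]]|[c [y0 [-> [E ->]]]]].
      - apply HB3 in E; rewrite L2h, L0h; exact E.
      - apply HC3 in E; rewrite L2k, L0k; exact E. }
    split.
    { intros z x y H; destruct (G1a _ _ H) as [[[b1 b2] [y0 [E [E' ->]]]]|[[c1 c2] [y0 [E [E' ->]]]]];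
        simpl in *; injection E; intros -> ->.
      - apply HB6 in E'; apply G0b; exact E'.
      - apply HC6 in E'; apply G0c; exact E'. }
    { intros d y H; destruct (G2a _ _ H) as [[b [y0 [-> [E ->]]]]|[c [y0 [-> [E ->]]]]].
      - apply HB7 in E; apply G3b; exact E.
      - apply HC7 in E; apply G3c; exact E. }
  - unfold embedding; simpl.
    split; [exact Hh|].
    split; [intros; symmetry; apply L0h|].
    split; [intros; symmetry; apply L1h|].
    split; [intros; symmetry; apply L2h|].
    split; [intros; apply G0b; auto|].
    split; [intros z x y E; apply (G1b (z, x)); exact E|].
    split; intros; [apply G2b | apply G3b]; auto.
  - unfold embedding; simpl.
    split; [exact Hk|].
    split; [intros; symmetry; apply L0k|].
    split; [intros; symmetry; apply L1k|].
    split; [intros; symmetry; apply L2k|].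
    split; [intros; apply G0c; auto|].
    split; [intros z x y E; apply (G1c (z, x)); exact E|].
    split; intros; [apply G2c | apply G3c]; auto.
Qed.

Definition kmap {A B C : Type} (f : A -> B) (g : A -> C) (c : C) : B + C :=
  match excluded_middle_informative (exists a, g a = c) with
  | left H => inl (f (proj1_sig (constructive_indefinite_description _ H)))
  | right _ => inr c end.

Lemma kmap_spec {A B C : Type} (f : A -> B) (g : A -> C) c :
  (exists a, g a = c /\ kmap f g c = inl (f a)) \/ ((~ exists a, g a = c) /\ kmap f g c = inr c).
Proof.
  unfold kmap; destruct excluded_middle_informative as [H|H].
  - left; destruct (constructive_indefinite_description _ H) as [a Ha]; simpl; eauto.
  - right; auto.
Qed.

Lemma lift_D {B D} (MD : Lstr D) (h : B -> D) (MB : Lstr B) C (MC : Lstr C) (k : C -> D) :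
  T0 MD -> embedding MB MD h -> embedding MC MD k ->
  exists (E : Type) (ME : Lstr E) (h' : B -> E) (k' : C -> E),
    T0plus ME /\ embedding MB ME h' /\ embedding MC ME k' /\
    exists e : D -> E, (forall b, h' b = e (h b)) /\ (forall c, k' c = e (k c)).
Proof.
  intros HD Eh Ek. destruct (part4 MD HD) as [E [ME [e [HE Ee]]]].
  exists E, ME, (fun b => e (h b)), (fun c => e (k c)).
  split; [auto|]. split; [eapply emb_comp; eauto|]. split; [eapply emb_comp; eauto|].
  exists e; split; reflexivity.
Qed.

Lemma AP : T0plus_AP.
Proof.
  intros A B C MA MB MC f g HA HB HC Ef Eg.
  destruct Ef as [fi [fQ0 [fQ1 [fQ2 [f0 [f1 [f2 f3]]]]]]].
  destruct Eg as [gi [gQ0 [gQ1 [gQ2 [g0 [g1 [g2 g3]]]]]]].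
  destruct HA as [HA0 [T0' [T1 [T2 T3]]]].
  set (k := kmap f g).
  assert (kg : forall a, k (g a) = inl (f a)).
  { intros a; destruct (kmap_spec f g (g a)) as [[a' [E1 E2]]|[N _]].
    - apply gi in E1; subst; exact E2.
    - exfalso; eauto. }
  assert (hk : forall b c, (inl b : B + C) = k c -> exists a, b = f a /\ c = g a).
  { intros b c E. destruct (kmap_spec f g c) as [[a [E1 E2]]|[_ E2]]; unfold k in E; rewrite E2 in E.
    - injection E; intros; subst; eauto.
    - discriminate. }
  destruct (amalg_gen MB MC inl k (proj1 HB) (proj1 HC)) as [MD [HD [Eh Ek]]].
  - intros b b' E; injection E; auto.
  - intros c c' E. destruct (kmap_spec f g c) as [[a [E1 E2]]|[N1 E2]];
      destruct (kmap_spec f g c') as [[a' [E1' E2']]|[N1' E2']]; unfold k in E;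
      rewrite E2, E2' in E; try discriminate; injection E; intros E3.
    + apply fi in E3; subst; reflexivity.
    + exact E3.
  - intros b c E; apply hk in E; destruct E as [a [-> ->]].
    rewrite <- fQ0, <- gQ0, <- fQ1, <- gQ1, <- fQ2, <- gQ2; tauto.
  - intros b c y0 y1 E F G; apply hk in E; destruct E as [a [-> ->]].
    assert (Q1 MA a) by (apply fQ1; apply (proj1 (proj2 (proj2 (proj1 HB))) _ _ F)).
    destruct (T0' a H) as [z Hz]. rewrite (f0 _ _ Hz) in F; rewrite (g0 _ _ Hz) in G.
    injection F; injection G; intros <- <-; symmetry; apply kg.
  - intros b1 b2 c1 c2 y0 y1 E E' F G; apply hk in E; apply hk in E';
      destruct E as [a1 [-> ->]]; destruct E' as [a2 [-> ->]].
    pose proof (proj1 (proj2 (proj2 (proj2 (proj1 HB)))) _ _ _ F) as [Q2b [Q0b _]].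
    apply fQ2 in Q2b; apply fQ0 in Q0b.
    destruct (T1 a1 a2 Q2b Q0b) as [z Hz]. rewrite (f1 _ _ _ Hz) in F; rewrite (g1 _ _ _ Hz) in G.
    injection F; injection G; intros <- <-; symmetry; apply kg.
  - intros b c y0 y1 E F G; apply hk in E; destruct E as [a [-> ->]].
    assert (Q0 MA a) by (apply fQ0; apply (proj1 (proj2 (proj2 (proj2 (proj2 (proj1 HB))))) _ _ F)).
    destruct (T2 a H) as [z Hz]. rewrite (f2 _ _ Hz) in F; rewrite (g2 _ _ Hz) in G.
    injection F; injection G; intros <- <-; symmetry; apply kg.
  - intros b c y0 y1 E F G; apply hk in E; destruct E as [a [-> ->]].
    assert (Q2 MA a) by (apply fQ2; apply (proj1 (proj2 (proj2 (proj2 (proj2 (proj2 (proj1 HB)))))) _ _ F)).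
    destruct (T3 a H) as [z Hz]. rewrite (f3 _ _ Hz) in F; rewrite (g3 _ _ Hz) in G.
    injection F; injection G; intros <- <-; symmetry; apply kg.
  - destruct (lift_D MD inl MB C MC k HD Eh Ek) as [E [ME [h' [k' [HE [Eh' [Ek' [e [He Ke]]]]]]]]].
    exists E, ME, h', k'. split; [auto|]. split; [auto|]. split; [auto|].
    intros a; rewrite He, Ke, kg; reflexivity.
Qed.

Lemma JEP : T0plus_JEP.
Proof.
  intros B C MB MC HB HC.
  destruct (amalg_gen MB MC inl inr (proj1 HB) (proj1 HC)) as [MD [HD [Eh Ek]]];
    try (intros; discriminate).
  - intros b b' E; injection E; auto.
  - intros c c' E; injection E; auto.
  - destruct (lift_D MD inl MB C MC inr HD Eh Ek) as [E [ME [h' [k' [HE [Eh' [Ek' _]]]]]]].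
    exists E, ME, h', k'; auto.
Qed.

Theorem claim2p4 :
  (* (1) *)
  (forall (U : Type) (M : Lstr U), T0plus M ->
     (exists x, Q0 M x) /\ (exists x, Q1 M x) /\ (exists x, Q2 M x) /\
     onto_Q0 M (F0 M) /\ onto_Q0 M (F3 M)) /\
  (* (2) *)
  ((forall (U : Type) (M : Lstr U),
      T0 M -> (exists x, Q0 M x) -> (exists x, Q2 M x) ->
      onto_Q0 M (F0 M) -> onto_Q0 M (F3 M) ->
      exists N : Lstr U, T0plus N /\ same_universe_extension M N) /\
   (forall (U : Type) (M : Lstr U), T0plus M -> T0 M)) /\
  (* (3) *)
  (exists (U : Type) (M : Lstr U),
      T0 M /\ (exists x, Q0 M x) /\ (exists x, Q2 M x) /\ onto_Q0 M (F3 M) /\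
      ~ (exists N : Lstr U, T0plus N /\ same_universe_extension M N)) /\
  (* (4) *)
  (forall (U : Type) (M : Lstr U), T0 M ->
     exists (V : Type) (N : Lstr V) (f : U -> V), T0plus N /\ embedding M N f) /\
  (* (5) *)
  (T0plus_AP /\ T0plus_JEP).
Proof.
  split; [intros U M; apply part1|].
  split; [split; [intros U M; apply part2 | intros U M; apply part2b]|].
  split; [exact part3|].
  split; [intros U M; apply part4|].
  split; [exact AP | exact JEP].
Qed.
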